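(* Let $\mathcal J$ be an instance of the uniform a priori TRP on vertex set $\bigcup_{v\in X}S_v$ (with root $r$), where for each $v\in X$ the vertices of $S_v$ are co-located (pairwise distance $0$ and identical distances to all other vertices), and every vertex is independently active with probability $p$; let $\Pi$ denote this distribution of the active set. Let $\tau$ be a master tour, fix $z\in X$, and let $C_z^1,\dots,C_z^k$ be the minimal partition of $S_z$ such that the vertices of each $C_z^\ell$ appear consecutively in $\tau$. For two distinct parts $C_z^i$ and $C_z^j$, let $\tau_i$ be the tour obtained from $\tau$ by relocating the vertices of $C_z^j$ to immediately after $C_z^i$, and $\tau_j$ the tour obtained from $\tau$ by relocating the vertices of $C_z^i$ to immediately before $C_z^j$. Then $$\mathbb{E}_{A\sim\Pi}[\mathsf{LAT}^A_\tau]\ge\min\big(\mathbb{E}_{A\sim\Pi}[\mathsf{LAT}^A_{\tau_i}],\ \mathbb{E}_{A\sim\Pi}[\mathsf{LAT}^A_{\tau_j}]\big).$$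
   Context: A master tour is a tour from the root $r$ visiting all vertices. For an active set $A$, the master tour $\pi$ is shortcut to visit only $A$ in the same order starting from $r$; $\mathsf{LAT}^A_\pi(w)$ is the distance from $r$ to $w\in A$ along this shortcut tour, and $\mathsf{LAT}^A_\pi=\sum_{w\in A}\mathsf{LAT}^A_\pi(w)$. *)

(* Defs.v *)
From mathcomp Require Import all_boot all_order all_algebra.
Set Implicit Arguments. Unset Strict Implicit. Unset Printing Implicit Defensive.
Import Order.TTheory GRing.Theory Num.Theory.
Local Open Scope ring_scope.

Section TRP.
Variables (R : realFieldType) (V : finType) (d : V -> V -> R) (r : V).

Fixpoint lat_from (x : V) (acc : R) (s : seq V) : R :=
  match s with
  | [::] => 0
  | y :: s' => (acc + d x y) + lat_from y (acc + d x y) s'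
  end.

Definition LAT (A : {set V}) (pi : seq V) : R :=
  lat_from r 0 [seq x <- pi | x \in A].

Definition master_tour (pi : seq V) : Prop :=
  uniq pi /\ forall v, (v \in pi) = (v != r).

Definition ELAT (p : R) (pi : seq V) : R :=
  \sum_(A : {set V} | r \notin A)
     p ^+ #|A| * (1 - p) ^+ (#|V| - 1 - #|A|)%N * LAT A pi.

Variables (X : finType) (grp : V -> X).

Definition inS (z : X) (v : V) : bool := (v != r) && (grp v == z).

(* C is one of the parts of the minimal partition of S_z into blocks that
   are consecutive in pi, i.e. a maximal run of S_z-vertices in pi *)
Definition maximal_run (z : X) (pi C : seq V) : Prop :=
  exists a c, pi = a ++ C ++ c /\ C != [::] /\ all (inS z) C /\
    (if a is _ :: _ then ~~ inS z (last r a) else true) /\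
    (if c is y :: _ then ~~ inS z y else true).

Definition move_after (pi Ci Cj : seq V) : seq V :=
  let pi' := [seq x <- pi | x \notin Cj] in
  let k := (index (last r Ci) pi').+1 in
  take k pi' ++ Cj ++ drop k pi'.

Definition move_before (pi Ci Cj : seq V) : seq V :=
  let pi' := [seq x <- pi | x \notin Ci] in
  let k := index (head r Cj) pi' in
  take k pi' ++ Ci ++ drop k pi'.

End TRP.

(* Main.v *)
Require Import Defs.
From mathcomp Require Import all_boot all_order all_algebra.
From mathcomp Require Import ring lra zify.
Import Order.TTheory GRing.Theory Num.Theory.

Set Implicit Arguments. Unset Strict Implicit. Unset Printing Implicit Defensive.

Lemma cat_split (T : Type) (a b c e : seq T) : a ++ b = c ++ e -> size a <= size c ->
  exists t, c = a ++ t /\ b = t ++ e.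
Proof.
elim: a c => [|x a IH] [|y c] //=.
- by move=> -> _; exists [::].
- by move=> -> _; exists (y :: c).
- case=> -> h; rewrite ltnS => /(IH _ h) [t [-> ->]]; by exists t.
Qed.

Section Runs.
Variables (V X : finType) (r : V) (grp : V -> X) (z : X).
Local Notation inS := (inS r grp z).

Lemma run_left (a : seq V) : (if a is _ :: _ then is_true (~~ inS (last r a)) else is_true true) ->
  a = [::] \/ ~~ inS (last r a).
Proof. by case: a => [|x a]; [left | right]. Qed.

Lemma run_right (c : seq V) : (if c is y :: _ then is_true (~~ inS y) else is_true true) ->
  forall y c', c = y :: c' -> ~~ inS y.
Proof. by move=> h y c' E; rewrite E in h. Qed.

Lemma run_cmp a1 C1 c1 a2 C2 c2 :
  all inS C1 -> all inS C2 ->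
  (if a2 is _ :: _ then is_true (~~ inS (last r a2)) else is_true true) ->
  (if c1 is y :: _ then is_true (~~ inS y) else is_true true) ->
  (if c2 is y :: _ then is_true (~~ inS y) else is_true true) ->
  a1 ++ C1 ++ c1 = a2 ++ C2 ++ c2 -> size a1 <= size a2 ->
  C1 = C2 \/ exists M, a2 = a1 ++ C1 ++ M.
Proof.
move=> h1 h2 ha2 hc1 hc2 E le.
have [t [Ea2 Et]] := cat_split E le.
case: t Ea2 Et => [|y t] Ea2 Et.
  left; rewrite /= in Et.
  case: (leqP (size C1) (size C2)) => hs.
    have [t' [E2 E1]] := cat_split Et hs.
    case: t' E2 E1 => [|y t'] E2 E1; first by rewrite E2 cats0.
    have := run_right hc1 E1; rewrite E2 in h2.
    by move: h2; rewrite all_cat => /andP[_] /= /andP[-> _].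
  have [t' [E2 E1]] := cat_split (esym Et) (ltnW hs).
  case: t' E2 E1 => [|y t'] E2 E1; first by rewrite E2 cats0.
  have := run_right hc2 E1; rewrite E2 in h1.
  by move: h1; rewrite all_cat => /andP[_] /= /andP[-> _].
case: (leqP (size C1) (size (y :: t))) => hs.
  have [M [EM _]] := cat_split Et hs.
  by right; exists M; rewrite Ea2 EM.
have [t2 [E2 _]] := cat_split (esym Et) (ltnW hs).
case: (run_left ha2); first by rewrite Ea2; case: a1 {E le Ea2}.
rewrite Ea2 last_cat /=.
have : last y t \in y :: t by apply: mem_last.
move=> hm; move: h1; rewrite E2 all_cat => /andP[/allP /(_ _ hm) -> _].
by [].
Qed.

Lemma runs_order tau Ci Cj :
  maximal_run r grp z tau Ci -> maximal_run r grp z tau Cj -> Ci != Cj ->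
  exists P M Q, tau = P ++ Ci ++ M ++ Cj ++ Q \/ tau = P ++ Cj ++ M ++ Ci ++ Q.
Proof.
move=> [a1 [c1 [E1 [n1 [h1 [ha1 hc1]]]]]] [a2 [c2 [E2 [n2 [h2 [ha2 hc2]]]]]] neq.
have E : a1 ++ Ci ++ c1 = a2 ++ Cj ++ c2 by rewrite -E1 -E2.
case: (leqP (size a1) (size a2)) => hs.
  case: (run_cmp h1 h2 ha2 hc1 hc2 E hs) => [eq|[M EM]]; first by rewrite eq eqxx in neq.
  exists a1, M, c2; left; by rewrite E2 EM -!catA.
case: (run_cmp h2 h1 ha1 hc2 hc1 (esym E) (ltnW hs)) => [eq|[M EM]]; first by rewrite eq eqxx in neq.
exists a2, M, c1; right; by rewrite E1 EM -!catA.
Qed.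

End Runs.

Section Moves.
Variables (V : finType) (r : V).

Lemma uniq_catP (a b : seq V) x : uniq (a ++ b) -> x \in a -> x \in b -> False.
Proof.
rewrite cat_uniq => /and3P[_ /hasPn H _] xa xb; by move: (H x xb); rewrite /= xa.
Qed.

Lemma filt_keep (s C : seq V) : (forall x, x \in s -> x \in C -> False) ->
  [seq x <- s | x \notin C] = s.
Proof.
move=> H; apply/all_filterP/allP => x xs; apply/negP => xC; exact: H x xs xC.
Qed.

Lemma filt_drop (C : seq V) : [seq x <- C | x \notin C] = [::].
Proof. by rewrite (eq_in_filter (a2 := pred0)) ?filter_pred0 // => x /= ->. Qed.

Lemma moves1 P Ci M Cj Q : uniq (P ++ Ci ++ M ++ Cj ++ Q) -> Ci != [::] -> Cj != [::] ->
  move_after r (P ++ Ci ++ M ++ Cj ++ Q) Ci Cj = P ++ (Ci ++ Cj) ++ M ++ Q /\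
  move_before r (P ++ Ci ++ M ++ Cj ++ Q) Ci Cj = P ++ M ++ (Ci ++ Cj) ++ Q.
Proof.
move=> U nCi nCj.
have D : forall x, x \in P ++ Ci ++ M ++ Cj ++ Q -> forall a b,
   P ++ Ci ++ M ++ Cj ++ Q = a ++ b -> x \in a -> x \in b -> False.
  by move=> x _ a b E; rewrite E in U; exact: uniq_catP.
split.
- rewrite /move_after !filter_cat filt_drop.
  rewrite (filt_keep (s := P)); last first.
    by move=> x xa xb; apply: (D x _ P (Ci ++ M ++ Cj ++ Q)) => //; rewrite !mem_cat xb !orbT.
  rewrite (filt_keep (s := Ci)); last first.
    by move=> x xa xb; apply: (D x _ (P ++ Ci) (M ++ Cj ++ Q)); rewrite ?catA // ?mem_cat ?xa ?xb ?orbT.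
  rewrite (filt_keep (s := M)); last first.
    by move=> x xa xb; apply: (D x _ (P ++ Ci ++ M) (Cj ++ Q)); rewrite ?catA // ?mem_cat ?xa ?xb ?orbT.
  rewrite (filt_keep (s := Q)); last first.
    by move=> x xa xb; apply: (D x _ (P ++ Ci ++ M ++ Cj) Q); rewrite ?catA // ?mem_cat ?xa ?xb ?orbT.
  case: Ci nCi U D => [//|c0 Ct] _ U D /=.
  have hP : last c0 Ct \notin P.
    apply/negP => h; apply: (D (last c0 Ct) _ P ((c0 :: Ct) ++ M ++ Cj ++ Q)) => //.
    by rewrite mem_cat h.
    by rewrite mem_cat mem_last.
  rewrite ?cat0s index_cat (negPf hP) -cat_cons index_cat mem_last index_last; last first.
    by move: U; rewrite !cat_uniq => /and3P[_ _] /and3P[].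
  have -> : (size P + size Ct).+1 = size (P ++ c0 :: Ct) by rewrite size_cat /= addnS.
  rewrite [P ++ (_ :: _) ++ _]catA take_size_cat // drop_size_cat //.
  by rewrite -!catA.
- rewrite /move_before !filter_cat filt_drop.
  rewrite (filt_keep (s := P)); last first.
    by move=> x xa xb; apply: (D x _ P (Ci ++ M ++ Cj ++ Q)); rewrite ?mem_cat ?xa ?xb ?orbT.
  rewrite (filt_keep (s := Cj)); last first.
    by move=> x xa xb; apply: (D x _ (P ++ Ci ++ M) (Cj ++ Q)); rewrite ?catA // ?mem_cat ?xa ?xb ?orbT.
  rewrite (filt_keep (s := M)); last first.
    by move=> x xa xb; apply: (D x _ (P ++ Ci) (M ++ Cj ++ Q)); rewrite ?catA // ?mem_cat ?xa ?xb ?orbT.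
  rewrite (filt_keep (s := Q)); last first.
    by move=> x xa xb; apply: (D x _ (P ++ Ci ++ M ++ Cj) Q); rewrite ?catA // ?mem_cat ?xa ?xb ?orbT.
  case: Cj nCj U D => [//|c0 Ct] _ U D /=.
  have hP : c0 \notin P.
    apply/negP => h; apply: (D c0 _ P (Ci ++ M ++ (c0 :: Ct) ++ Q));
    by rewrite ?mem_cat ?h ?mem_head ?orbT.
  have hM : c0 \notin M.
    apply/negP => h; apply: (D c0 _ (P ++ Ci ++ M) ((c0 :: Ct) ++ Q)); rewrite ?catA //;
    by rewrite ?mem_cat ?h ?mem_head ?orbT.
  rewrite ?cat0s index_cat (negPf hP) index_cat (negPf hM) /= eqxx addn0.
  rewrite -(size_cat P M) [P ++ M ++ _]catA take_size_cat // drop_size_cat //.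
  by rewrite -!catA.
Qed.


Lemma moves2 P Ci M Cj Q : uniq (P ++ Cj ++ M ++ Ci ++ Q) -> Ci != [::] -> Cj != [::] ->
  move_after r (P ++ Cj ++ M ++ Ci ++ Q) Ci Cj = P ++ M ++ (Ci ++ Cj) ++ Q /\
  move_before r (P ++ Cj ++ M ++ Ci ++ Q) Ci Cj = P ++ (Ci ++ Cj) ++ M ++ Q.
Proof.
move=> U nCi nCj.
have D : forall x, x \in P ++ Cj ++ M ++ Ci ++ Q -> forall a b,
   P ++ Cj ++ M ++ Ci ++ Q = a ++ b -> x \in a -> x \in b -> False.
  by move=> x _ a b E; rewrite E in U; exact: uniq_catP.
split.
- rewrite /move_after !filter_cat filt_drop.
  rewrite (filt_keep (s := P)); last first.
    by move=> x xa xb; apply: (D x _ P (Cj ++ M ++ Ci ++ Q)); rewrite ?mem_cat ?xa ?xb ?orbT.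
  rewrite (filt_keep (s := Ci)); last first.
    by move=> x xa xb; apply: (D x _ (P ++ Cj ++ M) (Ci ++ Q)); rewrite ?catA // ?mem_cat ?xa ?xb ?orbT.
  rewrite (filt_keep (s := M)); last first.
    by move=> x xa xb; apply: (D x _ (P ++ Cj) (M ++ Ci ++ Q)); rewrite ?catA // ?mem_cat ?xa ?xb ?orbT.
  rewrite (filt_keep (s := Q)); last first.
    by move=> x xa xb; apply: (D x _ (P ++ Cj ++ M ++ Ci) Q); rewrite ?catA // ?mem_cat ?xa ?xb ?orbT.
  case: Ci nCi U D => [//|c0 Ct] _ U D /=.
  have hP : last c0 Ct \notin P.
    apply/negP => h; apply: (D (last c0 Ct) _ P (Cj ++ M ++ (c0 :: Ct) ++ Q));
    by rewrite ?mem_cat ?h ?mem_last ?orbT.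
  have hM : last c0 Ct \notin M.
    apply/negP => h; apply: (D (last c0 Ct) _ (P ++ Cj ++ M) ((c0 :: Ct) ++ Q)); rewrite ?catA //;
    by rewrite ?mem_cat ?h ?mem_last ?orbT.
  rewrite ?cat0s index_cat (negPf hP) index_cat (negPf hM) -cat_cons index_cat mem_last index_last; last first.
    by move: U; rewrite !cat_uniq => /and3P[_ _] /and3P[_ _] /and3P[_ _] /and3P[].
  have -> : (size P + (size M + size Ct)).+1 = size (P ++ M ++ c0 :: Ct) by rewrite !size_cat /= !addnS.
  rewrite [P ++ M ++ (_ :: _) ++ _]catA [P ++ (M ++ _)]catA [(P ++ M) ++ (_ :: _) ++ Q]catA take_size_cat // drop_size_cat //.
  by rewrite -!catA.
- rewrite /move_before !filter_cat filt_drop.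
  rewrite (filt_keep (s := P)); last first.
    by move=> x xa xb; apply: (D x _ P (Cj ++ M ++ Ci ++ Q)); rewrite ?mem_cat ?xa ?xb ?orbT.
  rewrite (filt_keep (s := Cj)); last first.
    by move=> x xa xb; apply: (D x _ (P ++ Cj) (M ++ Ci ++ Q)); rewrite ?catA // ?mem_cat ?xa ?xb ?orbT.
  rewrite (filt_keep (s := M)); last first.
    by move=> x xa xb; apply: (D x _ (P ++ Cj ++ M) (Ci ++ Q)); rewrite ?catA // ?mem_cat ?xa ?xb ?orbT.
  rewrite (filt_keep (s := Q)); last first.
    by move=> x xa xb; apply: (D x _ (P ++ Cj ++ M ++ Ci) Q); rewrite ?catA // ?mem_cat ?xa ?xb ?orbT.
  case: Cj nCj U D => [//|c0 Ct] _ U D /=.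
  have hP : c0 \notin P.
    apply/negP => h; apply: (D c0 _ P ((c0 :: Ct) ++ M ++ Ci ++ Q));
    by rewrite ?mem_cat ?h ?mem_head ?orbT.
  rewrite ?cat0s index_cat (negPf hP) /= eqxx addn0.
  by rewrite take_size_cat // drop_size_cat // -!catA.
Qed.

End Moves.

Local Open Scope ring_scope.

Section Lat.
Variables (R : realFieldType) (V : finType) (d : V -> V -> R) (r : V).
Hypothesis d_refl : forall x, d x x = 0.
Hypothesis d_sym : forall x y, d x y = d y x.
Hypothesis d_ge0 : forall x y, 0 <= d x y.
Hypothesis d_tri : forall x y w, d x w <= d x y + d y w.

Fixpoint plen (x : V) (s : seq V) : R :=
  match s with [::] => 0 | y :: s' => d x y + plen y s' end.

Definition lat x s := lat_from d x 0 s.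

Lemma lat_acc x acc s : lat_from d x acc s = (size s)%:R * acc + lat x s.
Proof.
elim: s x acc => [|y s IH] x acc /=; first by rewrite mul0r addr0.
rewrite /lat /= IH [lat_from _ _ (0 + _) _]IH add0r -/(lat y s).
rewrite -[(size s).+1]addn1 natrD; ring.
Qed.

Lemma lat_cat x acc s1 s2 : lat_from d x acc (s1 ++ s2) =
  lat_from d x acc s1 + lat_from d (last x s1) (acc + plen x s1) s2.
Proof.
elim: s1 x acc => [|y s IH] x acc /=; first by rewrite add0r addr0.
by rewrite IH !addrA.
Qed.

Lemma lat_cat0 x s1 s2 : lat x (s1 ++ s2) =
  lat x s1 + (size s2)%:R * plen x s1 + lat (last x s1) s2.
Proof. by rewrite /lat lat_cat add0r [lat_from _ _ (plen _ _) _]lat_acc addrA. Qed.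

Lemma plen_nseq y x k : plen y (nseq k.+1 x) = d y x.
Proof.
rewrite /=; elim: k => [|k IH] /=; first by rewrite addr0.
by rewrite d_refl add0r.
Qed.

Lemma lat_nseq y x k : lat y (nseq k x) = k%:R * d y x.
Proof.
case: k => [|k]; first by rewrite mul0r.
rewrite /lat /= add0r lat_acc size_nseq.
have -> : lat x (nseq k x) = 0.
  elim: k => [|k IH] //.
  by rewrite [nseq _ _]/= /lat /= d_refl !add0r; exact IH.
rewrite addr0 mulrS; ring.
Qed.

Lemma last_nseq (y x : V) k : last y (nseq k.+1 x) = x.
Proof. by elim: k. Qed.

Lemma plen_ge x s : d x (last x s) <= plen x s.
Proof.
elim: s x => [|y s IH] x /=; first by rewrite d_refl.
apply: le_trans (d_tri x y (last y s)) _; by rewrite lerD2l.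
Qed.


Lemma lat_cons y h t : lat y (h :: t) = (size t).+1%:R * d y h + lat h t.
Proof. rewrite /lat /= add0r lat_acc -/(lat h t) mulrSr; ring. Qed.

Lemma lat_nseq_cat w x k s : lat w (nseq k x ++ s) =
  if k is 0 then lat w s else k%:R * d w x + (size s)%:R * d w x + lat x s.
Proof.
case: k => [//|k]; by rewrite lat_cat0 lat_nseq plen_nseq last_nseq.
Qed.

Definition hq y (s : seq V) := if s is h :: _ then d y h else 0.

Lemma lat_hq y s : lat y s = (size s)%:R * hq y s + lat (head y s) (behead s).
Proof.
case: s => [|h t]; first by rewrite /= mul0r add0r.
by rewrite lat_cons.
Qed.

Definition Ind (k : nat) : R := if k is 0 then 0 else 1.

Lemma core (P M Q : seq V) (x : V) :
  (M = [::]) \/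
  (exists Z a D da db (m q : nat), 0 <= D /\ 0 <= da /\ 0 <= db /\ forall k1 k2,
    [/\ lat r (P ++ nseq k1 x ++ M ++ nseq k2 x ++ Q) =
      Z + (k1 + k2)%:R * a + k2%:R * D + Ind k1 * (m + q)%:R * da
        + Ind k1 * k2%:R * da + Ind k2 * q%:R * db,
      lat r (P ++ nseq (k1 + k2) x ++ M ++ Q) =
      Z + (k1 + k2)%:R * a + Ind (k1 + k2) * (m + q)%:R * da &
      lat r (P ++ M ++ nseq (k1 + k2) x ++ Q) =
      Z + (k1 + k2)%:R * (a + D) + Ind (k1 + k2) * q%:R * db]).
Proof.
case: M => [|m1 Mt]; [by left | right].
set u := last r P; set v := last m1 Mt; set T := plen r P.
set WQ := lat (head x Q) (behead Q).
have lQ : forall y, lat y Q = (size Q)%:R * hq y Q + lat (head x Q) (behead Q).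
  by move=> y; case: Q {WQ} => [|h t]; rewrite ?mul0r ?add0r // lat_cons.
exists (lat r P + ((size Mt).+1 + size Q)%:R * T + lat u (m1 :: Mt)
          + (size Q)%:R * plen u (m1 :: Mt) + lat v Q).
exists (T + d u x), (plen u (m1 :: Mt) + d v x - d u x), (d u x + d x m1 - d u m1),
  (d v x + hq x Q - hq v Q), (size Mt).+1, (size Q).
split; [|split; [|split]].
- have := plen_ge u (m1 :: Mt); have := d_tri u v x; rewrite [last _ _]/= -/v; lra.
- have := d_tri u x m1; lra.
- case: Q {WQ lQ} => [|h t] /=; first by have := d_ge0 v x; lra.
  have := d_tri v x h; lra.
move=> k1 k2.
have E : forall (s : seq V), lat r (P ++ s) = lat r P + (size s)%:R * T + lat u s.
  by move=> s; rewrite lat_cat0.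
rewrite !E !size_cat !size_nseq /=.
have LM : forall y s, lat y ((m1 :: Mt) ++ s) =
   (size Mt).+1%:R * d y m1 + lat m1 Mt + (size s)%:R * (d y m1 + plen m1 Mt) + lat v s.
  by move=> y s; rewrite lat_cat0 lat_cons.
have LM0 : forall y, lat y (m1 :: Mt) = (size Mt).+1%:R * d y m1 + lat m1 Mt.
  by move=> y; rewrite lat_cons.
rewrite /= in LM LM0.
split.
- rewrite lat_nseq_cat !LM !lat_nseq_cat !lQ ?LM0.
  case: k1 => [|k1]; case: k2 => [|k2]; do 2 do 2 rewrite /= ?size_cat ?size_nseq /=; ring.
- rewrite lat_nseq_cat !LM !lQ ?LM0.
  case: k1 => [|k1]; case: k2 => [|k2]; do 2 rewrite /= ?size_cat ?size_nseq /=; ring.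
- rewrite !LM !lat_nseq_cat !lQ ?LM0.
  case: k1 => [|k1]; case: k2 => [|k2]; do 2 rewrite /= ?size_cat ?size_nseq /=; ring.
Qed.

End Lat.

Section Sums.
Variables (R : realFieldType) (T : finType) (p : R).
Hypothesis p_ge0 : 0 <= p.
Hypothesis p_le1 : p <= 1.

Definition w (S A : {set T}) : R := p ^+ #|A| * (1 - p) ^+ (#|S| - #|A|).

Definition disj (S1 S2 : {set T}) := forall x, x \in S1 -> x \in S2 -> False.

Lemma cardsU_disj (S1 S2 : {set T}) : disj S1 S2 -> #|S1 :|: S2| = (#|S1| + #|S2|)%N.
Proof.
move=> D; rewrite cardsU; suff -> : S1 :&: S2 = set0 by rewrite cards0 subn0.
apply/setP=> x; rewrite !inE; apply/negP=> /andP[h1 h2]; exact: D h1 h2.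
Qed.

Lemma disj_sub (S1 S2 A1 A2 : {set T}) : disj S1 S2 -> A1 \subset S1 -> A2 \subset S2 -> disj A1 A2.
Proof. by move=> D /subsetP h1 /subsetP h2 x /h1 a /h2 b; exact: D a b. Qed.

Lemma w_split (S1 S2 A1 A2 : {set T}) : disj S1 S2 -> A1 \subset S1 -> A2 \subset S2 ->
  w (S1 :|: S2) (A1 :|: A2) = w S1 A1 * w S2 A2.
Proof.
move=> D h1 h2; rewrite /w (cardsU_disj D) (cardsU_disj (disj_sub D h1 h2)).
have l1 := subset_leq_card h1; have l2 := subset_leq_card h2.
have -> : (#|S1| + #|S2| - (#|A1| + #|A2|) = (#|S1| - #|A1|) + (#|S2| - #|A2|))%N by lia.
rewrite !exprD; ring.
Qed.

Lemma w_ge0 (S A : {set T}) : 0 <= w S A.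
Proof. by rewrite /w mulr_ge0 // exprn_ge0 // subr_ge0. Qed.

Lemma sum_split (S1 S2 : {set T}) (F : {set T} -> R) : disj S1 S2 ->
  \sum_(A : {set T} | A \subset S1 :|: S2) F A =
  \sum_(A1 : {set T} | A1 \subset S1) \sum_(A2 : {set T} | A2 \subset S2) F (A1 :|: A2).
Proof.
move=> D; rewrite pair_big_dep /=.
rewrite (reindex_onto (fun q : {set T} * {set T} => q.1 :|: q.2)
           (fun A => (A :&: S1, A :&: S2))) /=; last first.
  by move=> A hA; rewrite -setIUr; apply/setIidPl.
apply: eq_bigl => -[A1 A2] /=.
apply/idP/idP.
- case/andP=> _ /eqP [<- <-]; by rewrite !subsetIr.
- case/andP=> /subsetP h1 /subsetP h2; apply/andP; split.
    apply/subsetP=> x; rewrite !inE => /orP[/h1 ->|/h2 ->] //; by rewrite orbT.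
  apply/eqP; congr pair; apply/setP=> x; rewrite !inE.
    case e1: (x \in A1); first by rewrite (h1 _ e1).
    case e2: (x \in A2) => //=; apply/negP => hs; exact: D x hs (h2 _ e2).
  case e2: (x \in A2); first by rewrite (h2 _ e2) orbT.
  case e1: (x \in A1) => //=; apply/negP => hs; exact: D x (h1 _ e1) hs.
Qed.


Lemma sum_sub1 (x : T) (F : {set T} -> R) :
  \sum_(A : {set T} | A \subset [set x]) F A = F set0 + F [set x].
Proof.
rewrite (eq_bigl (fun A => A \in powerset [set x])); last by move=> A; rewrite powersetE.
rewrite powerset1 big_setU1 ?big_set1 //= inE eq_sym.
apply/eqP => /setP /(_ x); by rewrite !inE eqxx.
Qed.

Lemma sum_step x (S' : {set T}) (G : {set T} -> R) : x \notin S' ->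
  \sum_(A : {set T} | A \subset x |: S') w (x |: S') A * G A =
  (1 - p) * \sum_(A : {set T} | A \subset S') w S' A * G A +
  p * \sum_(A : {set T} | A \subset S') w S' A * G (x |: A).
Proof.
move=> xS.
have D : disj [set x] S' by move=> y; rewrite inE => /eqP -> h; rewrite h in xS.
rewrite sum_split // sum_sub1 !mulr_sumr; congr (_ + _); apply: eq_bigr => A hA.
- rewrite w_split ?sub0set // set0U.
  by rewrite /w cards0 cards1 expr0 mul1r expr1; ring.
- rewrite w_split ?subxx //.
  by rewrite /w cards1 subnn expr0 mulr1 expr1; ring.
Qed.

Lemma moments (S : {set T}) :
  \sum_(A : {set T} | A \subset S) w S A = 1 /\
  \sum_(A : {set T} | A \subset S) w S A * #|A|%:R = p * #|S|%:R.
Proof.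
move: {2}#|S| (erefl #|S|) => n; elim: n S => [|n IH] S hS.
  have -> := cards0_eq hS.
  have Hs : forall F : {set T} -> R, \sum_(A : {set T} | A \subset set0) F A = F set0.
    by move=> F; rewrite (eq_bigl (pred1 set0)) ?big_pred1_eq // => A; rewrite /= subset0.
  rewrite !Hs /w cards0 sub0n !expr0; split; ring.
have [x xS] : exists x, x \in S by apply/card_gt0P; rewrite hS.
have xS' : x \notin S :\ x by rewrite !inE eqxx.
have hS' : #|S :\ x| = n by move: hS; rewrite (cardsD1 x S) xS /=; lia.
have [IH0 IH1] := IH _ hS'.
have E : forall A : {set T}, A \subset S :\ x -> #|x |: A| = (#|A|).+1.
  move=> A hA; rewrite cardsU1; case: (boolP (x \in A)) => // xA.
  by move/subsetP: hA => /(_ _ xA); rewrite (negPf xS').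
have F : forall c, \sum_(A : {set T} | A \subset S :\ x) w (S :\ x) A * c = c.
  by move=> c; rewrite -mulr_suml IH0 mul1r.
rewrite -(setD1K xS); split.
  rewrite (eq_bigr (fun A => w (x |: S :\ x) A * 1)); last by move=> *; rewrite mulr1.
  rewrite sum_step // !F; ring.
rewrite sum_step //.
rewrite [X in _ + p * X = _](eq_bigr (fun A => w (S :\ x) A * #|A|%:R + w (S :\ x) A * 1)); last first.
  by move=> A hA; rewrite E // mulrS; ring.
rewrite big_split /= F IH1 cardsU1 xS' hS' /= mulrS; ring.
Qed.


Lemma momentI (S : {set T}) :
  \sum_(A : {set T} | A \subset S) w S A * Ind R #|A| = 1 - (1 - p) ^+ #|S|.
Proof.
rewrite -{1}(moments S).1 (bigD1 set0) ?sub0set //= [in RHS](bigD1 set0) ?sub0set //=.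
have w0 : w S set0 = (1 - p) ^+ #|S| by rewrite /w cards0 subn0 expr0 mul1r.
rewrite cards0 /= mulr0 add0r w0.
rewrite (eq_bigr (fun A => w S A)).
  by rewrite addrAC addrN add0r.
move=> A /andP[_ hA]; rewrite -card_gt0 in hA.
by rewrite /Ind; case: #|A| hA => // n _; rewrite mulr1.
Qed.

Lemma moment3 (S : {set T}) (a b c : R) :
  \sum_(A : {set T} | A \subset S) w S A * (a + b * #|A|%:R + c * Ind R #|A|) =
  a + b * (p * #|S|%:R) + c * (1 - (1 - p) ^+ #|S|).
Proof.
rewrite (eq_bigr (fun A => a * w S A + b * (w S A * #|A|%:R) + c * (w S A * Ind R #|A|)));
  last by move=> *; ring.
rewrite !big_split /= -!mulr_sumr momentI (moments S).1 (moments S).2; ring.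
Qed.

End Sums.

Section Num.
Variables (R : realFieldType) (s : R).
Hypothesis s0 : 0 <= s.
Hypothesis s1 : s <= 1.

Fixpoint geo n : R := if n is n'.+1 then geo n' + s ^+ n' else 0.



Lemma geo1 n : 1 - s ^+ n = (1 - s) * geo n.
Proof.
elim: n => [|n IH] /=; first by rewrite expr0; ring.
by rewrite exprSr mulrDr -IH; ring.
Qed.

Lemma pow_ge0 n : 0 <= s ^+ n. Proof. exact: exprn_ge0. Qed.
Lemma pow_le1 n : s ^+ n <= 1. Proof. exact: exprn_ile1. Qed.

Lemma geo2 n : n%:R * s ^+ n <= geo n.
Proof.
elim: n => [|n IH] /=; first by rewrite mul0r.
have h : s ^+ n.+1 <= s ^+ n by rewrite exprSr ler_piMr // pow_ge0.
have h0 := pow_ge0 n; have h1 := pow_ge0 n.+1.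
have h2 : n%:R * s ^+ n.+1 <= n%:R * s ^+ n by rewrite ler_wpM2l // ler0n.
rewrite mulrSr mulrDl mul1r; lra.
Qed.

Lemma geo3 n : geo n <= n%:R.
Proof.
elim: n => [|n IH] //=; have := pow_le1 n; rewrite mulrSr; lra.
Qed.

Lemma geo_ge0 n : 0 <= geo n.
Proof. elim: n => [|n IH] //=; have := pow_ge0 n; lra. Qed.

Lemma key_num n1 n2 : n1%:R * s ^+ n1 * (1 - s ^+ n2) <= n2%:R * (1 - s ^+ n1).
Proof.
rewrite !geo1.
have a := geo2 n1; have b := geo3 n2; have c := geo_ge0 n2.
have e : 0 <= n1%:R * s ^+ n1 by rewrite mulr_ge0 ?ler0n ?pow_ge0.
have : n1%:R * s ^+ n1 * geo n2 <= geo n1 * n2%:R by apply: ler_pM.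
have f : 0 <= 1 - s by rewrite subr_ge0.
move/(ler_wpM2l f).
have -> : n1%:R * s ^+ n1 * ((1 - s) * geo n2) = (1 - s) * (n1%:R * s ^+ n1 * geo n2) by ring.
by have -> : n2%:R * ((1 - s) * geo n1) = (1 - s) * (geo n1 * n2%:R) by ring.
Qed.

End Num.

Section Block.
Variables (R : realFieldType) (T : finType) (p : R).
Hypothesis p_ge0 : 0 <= p.
Hypothesis p_le1 : p <= 1.

Lemma block_formula (S1 S2 : {set T}) (Lt : nat -> nat -> R) (La Lb : nat -> R)
  Z a D da db (m q : nat) :
  0 <= D -> 0 <= da -> 0 <= db ->
  (forall k1 k2,
   [/\ Lt k1 k2 = Z + (k1 + k2)%:R * a + k2%:R * D + Ind R k1 * (m + q)%:R * da
        + Ind R k1 * k2%:R * da + Ind R k2 * q%:R * db,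
       La (k1 + k2) = Z + (k1 + k2)%:R * a + Ind R (k1 + k2) * (m + q)%:R * da &
       Lb (k1 + k2) = Z + (k1 + k2)%:R * (a + D) + Ind R (k1 + k2) * q%:R * db]) ->
  \sum_(A1 : {set T} | A1 \subset S1) \sum_(A2 : {set T} | A2 \subset S2)
     w p S1 A1 * w p S2 A2 *
     (#|S1|%:R * (La (#|A1| + #|A2|) - Lt #|A1| #|A2|) +
      #|S2|%:R * (Lb (#|A1| + #|A2|) - Lt #|A1| #|A2|)) <= 0.
Proof.
move=> hD hda hdb H.
set n1 : R := #|S1|%:R; set n2 : R := #|S2|%:R; set N : R := (m + q)%:R.
set qq : R := q%:R.
set q1 : R := 1 - (1 - p) ^+ #|S1|; set q2 : R := 1 - (1 - p) ^+ #|S2|.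
have inner : forall A1 : {set T},
  \sum_(A2 : {set T} | A2 \subset S2) w p S1 A1 * w p S2 A2 *
     (n1 * (La (#|A1| + #|A2|) - Lt #|A1| #|A2|) + n2 * (Lb (#|A1| + #|A2|) - Lt #|A1| #|A2|))
  = w p S1 A1 * ((- n1 * D * p * n2 + n1 * N * da * q2 - n1 * qq * db * q2)
       + (n2 * D) * #|A1|%:R
       + (n2 * qq * db - n2 * N * da - (n1 + n2) * da * p * n2 - n1 * N * da * q2
          - n2 * qq * db * q2) * Ind R #|A1|).
  move=> A1.
  rewrite (eq_bigr (fun A2 => w p S1 A1 * (w p S2 A2 *
     ( n2 * (#|A1|%:R * D + Ind R #|A1| * qq * db - Ind R #|A1| * N * da)
     + (- n1 * D - (n1 + n2) * Ind R #|A1| * da) * #|A2|%:R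
     + (n1 * (1 - Ind R #|A1|) * N * da - n1 * qq * db - n2 * Ind R #|A1| * qq * db) * Ind R #|A2|)))).
    rewrite -mulr_sumr moment3 // -/n2 -/q2; congr (_ * _); clearbody n1 n2 N qq q1 q2; move: (Ind R #|A1|) (#|A1|%:R) => i k; clear; ring.
  move=> A2 _; case: (H #|A1| #|A2|) => -> -> ->; rewrite -/N -/qq.
  rewrite /Ind; case: #|A1| => [|k1]; case: #|A2| => [|k2]; rewrite ?addSn ?addnS ?add0n ?addn0; clearbody n1 n2 N qq q1 q2; move: (w p S1 A1) (w p S2 A2) => x y; clear; ring.
rewrite (eq_bigr _ (fun A1 _ => inner A1)).
rewrite moment3 // -/n1 -/q1.
have hs0 : 0 <= 1 - p by rewrite subr_ge0.
have hs1 : 1 - p <= 1 by rewrite lerBlDr lerDl.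
have K1 : n1 * q2 * (1 - q1) <= n2 * q1.
  have h := @key_num R (1 - p) hs0 hs1 #|S1| #|S2|.
  have -> : n1 * q2 * (1 - q1) = #|S1|%:R * (1 - p) ^+ #|S1| * (1 - (1 - p) ^+ #|S2|)
    by rewrite /n1 /q1 /q2; ring.
  exact: h.
have K2 : n2 * q1 * (1 - q2) <= n1 * q2.
  have h := @key_num R (1 - p) hs0 hs1 #|S2| #|S1|.
  have -> : n2 * q1 * (1 - q2) = #|S2|%:R * (1 - p) ^+ #|S2| * (1 - (1 - p) ^+ #|S1|)
    by rewrite /n2 /q1 /q2; ring.
  exact: h.
have -> : - n1 * D * p * n2 + n1 * N * da * q2 - n1 * qq * db * q2 +
  n2 * D * (p * n1) +
  (n2 * qq * db - n2 * N * da - (n1 + n2) * da * p * n2 - n1 * N * da * q2 -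
   n2 * qq * db * q2) * q1 =
  N * da * (n1 * q2 * (1 - q1) - n2 * q1) + qq * db * (n2 * q1 * (1 - q2) - n1 * q2)
   - q1 * (n1 + n2) * p * n2 * da.
  clearbody n1 n2 N qq q1 q2; clear; ring.
have hn1 : 0 <= n1 by rewrite ler0n.
have hn2 : 0 <= n2 by rewrite ler0n.
have hN : 0 <= N by rewrite ler0n.
have hq : 0 <= qq by rewrite ler0n.
have hq1 : 0 <= q1 by rewrite subr_ge0 exprn_ile1.
have t1 : N * da * (n1 * q2 * (1 - q1) - n2 * q1) <= 0.
  by apply: mulr_ge0_le0; [apply: mulr_ge0 | rewrite subr_le0].
have t2 : qq * db * (n2 * q1 * (1 - q2) - n1 * q2) <= 0.
  by apply: mulr_ge0_le0; [apply: mulr_ge0 | rewrite subr_le0].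
have t3 : 0 <= q1 * (n1 + n2) * p * n2 * da.
  by rewrite !mulr_ge0 // addr_ge0.
move: t1 t2 t3; clearbody n1 n2 N qq q1 q2; clear; move=> t1 t2 t3; lra.
Qed.

End Block.

Section Sum3.
Variables (R : realFieldType) (T : finType) (p : R).
Hypothesis p_ge0 : 0 <= p.
Hypothesis p_le1 : p <= 1.

Lemma sum3 (S0 S1 S2 : {set T}) (F : {set T} -> R) :
  disj S0 (S1 :|: S2) -> disj S1 S2 ->
  \sum_(A : {set T} | A \subset S0 :|: (S1 :|: S2)) w p (S0 :|: (S1 :|: S2)) A * F A =
  \sum_(A0 : {set T} | A0 \subset S0) w p S0 A0 *
    (\sum_(A1 : {set T} | A1 \subset S1) \sum_(A2 : {set T} | A2 \subset S2)
       w p S1 A1 * w p S2 A2 * F (A0 :|: (A1 :|: A2))).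
Proof.
move=> D0 D12; rewrite sum_split //; apply: eq_bigr => A0 h0.
rewrite sum_split // mulr_sumr; apply: eq_bigr => A1 h1.
rewrite mulr_sumr; apply: eq_bigr => A2 h2.
have e1 := setUSS h1 h2.
by rewrite w_split // w_split // !mulrA.
Qed.

End Sum3.

Section Main.
Variables (R : realFieldType) (V X : finType) (d : V -> V -> R) (r : V)
    (grp : V -> X) (p : R) (z : X).
Hypothesis d_refl : forall x, d x x = 0.
Hypothesis d_sym : forall x y, d x y = d y x.
Hypothesis d_ge0 : forall x y, 0 <= d x y.
Hypothesis d_tri : forall x y w, d x w <= d x y + d y w.
Hypothesis coloc : forall u w, u != r -> w != r -> grp u = grp w ->
        d u w = 0 /\ (forall y, d u y = d w y).
Hypothesis p_ge0 : 0 <= p.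
Hypothesis p_le1 : p <= 1.
Local Notation inS := (inS r grp z).
Variable x0 : V.
Hypothesis hx0 : inS x0.

Definition f (u : V) := if inS u then x0 else u.

Lemma inS_prop u : inS u -> u != r /\ grp u = z.
Proof. by case/andP => h /eqP. Qed.

Lemma f_dist u w : d (f u) (f w) = d u w.
Proof.
have [x0r gx0] := inS_prop hx0.
rewrite /f; case: (boolP (inS u)) => hu; case: (boolP (inS w)) => hw //.
- have [ur gu] := inS_prop hu; have [wr gw] := inS_prop hw.
  by rewrite d_refl; case: (coloc ur wr (etrans gu (esym gw))).
- have [ur gu] := inS_prop hu.
  by case: (coloc x0r ur (etrans gx0 (esym gu))) => _ ->.
- have [wr gw] := inS_prop hw.
  by rewrite d_sym; case: (coloc x0r wr (etrans gx0 (esym gw))) => _ ->; rewrite d_sym.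
Qed.

Lemma lat_f s y acc : lat_from d (f y) acc (map f s) = lat_from d y acc s.
Proof. by elim: s y acc => [|a s IH] y acc //=; rewrite f_dist IH. Qed.

Lemma f_r : f r = r.
Proof. by rewrite /f /inS eqxx. Qed.

Lemma LAT_f (A : {set V}) s : LAT d r A s = lat d r (map f [seq x <- s | x \in A]).
Proof. by rewrite /LAT /lat -{2}f_r lat_f. Qed.

Lemma map_f_block (a : pred V) s : all inS s -> map f (filter a s) = nseq (count a s) x0.
Proof.
elim: s => [|y s IH] //= /andP[hy hs]; case: (a y) => /=; rewrite IH //.
by rewrite /f hy.
Qed.

Lemma count_card (s : seq V) (A : {set V}) : uniq s -> A \subset [set x in s] ->
  count (fun x => x \in A) s = #|A|.
Proof.
move=> us /subsetP hA; rewrite -size_filter -(card_uniqP (filter_uniq _ us)).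
apply: eq_card => x; rewrite mem_filter; apply/andP/idP => [[]//| xA]; split=> //.
by have := hA x xA; rewrite inE.
Qed.

Lemma ELAT_eq s : ELAT d r p s =
  \sum_(A : {set V} | A \subset [set~ r]) w p [set~ r] A * LAT d r A s.
Proof.
rewrite /ELAT; apply: eq_big => [A|A _].
  apply/idP/idP => [h|/subsetP h].
    by apply/subsetP => x xA; rewrite !inE; apply/eqP => e; move: h; rewrite -e xA.
  by apply/negP => /h; rewrite !inE eqxx.
by rewrite /w cardsC1 subn1.
Qed.


Lemma five_apart (P B1 M B2 Q : seq V) : uniq (P ++ B1 ++ M ++ B2 ++ Q) ->
  [/\ uniq B1, uniq B2, (forall x, x \in B1 -> x \in B2 -> False),
      (forall x, x \in P ++ M ++ Q -> x \in B1 -> False) &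
      (forall x, x \in P ++ M ++ Q -> x \in B2 -> False)].
Proof.
move=> U.
have U' : uniq (B1 ++ B2 ++ (P ++ M ++ Q)).
  rewrite -(perm_uniq (s1 := P ++ B1 ++ M ++ B2 ++ Q)) //.
  apply/permP => a; rewrite !count_cat; lia.
move: (U'); rewrite cat_uniq => /and3P[u1 _ U2].
move: (U2); rewrite cat_uniq => /and3P[u2 _ _].
split => // x.
- move=> h1 h2; apply: (uniq_catP U' h1); by rewrite mem_cat h2.
- move=> h1 h2; apply: (uniq_catP U' h2); by rewrite mem_cat h1 orbT.
- move=> h1 h2; exact: (uniq_catP U2 h2).
Qed.

Lemma main_ineq (P B1 M B2 Q B : seq V) :
  uniq (P ++ B1 ++ M ++ B2 ++ Q) -> r \notin (P ++ B1 ++ M ++ B2 ++ Q) ->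
  all inS B1 -> all inS B2 -> all inS B ->
  (forall a : pred V, count a B = (count a B1 + count a B2)%N) ->
  #|[set x in B1]|%:R * (ELAT d r p (P ++ B ++ M ++ Q) - ELAT d r p (P ++ B1 ++ M ++ B2 ++ Q)) +
  #|[set x in B2]|%:R * (ELAT d r p (P ++ M ++ B ++ Q) - ELAT d r p (P ++ B1 ++ M ++ B2 ++ Q))
   <= 0.
Proof.
move=> U rt a1 a2 aB cB.
have [u1 u2 ap12 apP1 apP2] := five_apart U.
set tau := P ++ B1 ++ M ++ B2 ++ Q.
set S1 := [set x in B1]; set S2 := [set x in B2].
set S0 := [set~ r] :\: (S1 :|: S2).
have nr : forall x, (x \in B1) || (x \in B2) -> x != r.
  move=> x hx; apply/eqP => e; move: rt; rewrite -e /tau !mem_cat.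
  by case/orP: hx => ->; rewrite ?orbT.
have eU : [set~ r] = S0 :|: (S1 :|: S2).
  apply/setP => x; rewrite !inE.
  case: (boolP ((x \in B1) || (x \in B2))) => h /=; last by rewrite orbF.
  by rewrite ?orbT (nr _ h).
have D0 : disj S0 (S1 :|: S2) by move=> x; rewrite !inE => /andP[/negPf ->].
have D12 : disj S1 S2 by move=> x; rewrite !inE; exact: ap12.
rewrite !ELAT_eq.
have comb : forall (F1 F2 F3 : {set V} -> R) (c1 c2 : R),
  c1 * (\sum_(A : {set V} | A \subset [set~ r]) w p [set~ r] A * F2 A
        - \sum_(A : {set V} | A \subset [set~ r]) w p [set~ r] A * F1 A) +
  c2 * (\sum_(A : {set V} | A \subset [set~ r]) w p [set~ r] A * F3 A
        - \sum_(A : {set V} | A \subset [set~ r]) w p [set~ r] A * F1 A) =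
  \sum_(A : {set V} | A \subset [set~ r]) w p [set~ r] A *
     (c1 * (F2 A - F1 A) + c2 * (F3 A - F1 A)).
  move=> F1 F2 F3 c1 c2; rewrite -!sumrB !mulr_sumr -big_split; apply: eq_bigr => A _ /=; ring.
rewrite comb eU sum3 //.
apply: (big_ind (fun x : R => x <= 0)) => [//|x y hx hy|A0 h0].
  by rewrite -oppr_ge0 opprD addr_ge0 // oppr_ge0.
apply: mulr_ge0_le0; first exact: w_ge0.
set P' := map f [seq x <- P | x \in A0].
set M' := map f [seq x <- M | x \in A0].
set Q' := map f [seq x <- Q | x \in A0].
pose Lt := fun k1 k2 => lat d r (P' ++ nseq k1 x0 ++ M' ++ nseq k2 x0 ++ Q').
pose La := fun k => lat d r (P' ++ nseq k x0 ++ M' ++ Q').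
pose Lb := fun k => lat d r (P' ++ M' ++ nseq k x0 ++ Q').
have key : forall A1 A2 : {set V}, A1 \subset S1 -> A2 \subset S2 ->
  [/\ LAT d r (A0 :|: (A1 :|: A2)) tau = Lt #|A1| #|A2|,
      LAT d r (A0 :|: (A1 :|: A2)) (P ++ B ++ M ++ Q) = La (#|A1| + #|A2|) &
      LAT d r (A0 :|: (A1 :|: A2)) (P ++ M ++ B ++ Q) = Lb (#|A1| + #|A2|)].
  move=> A1 A2 h1 h2.
  have fP : forall s, (forall x, x \in s -> x \in P ++ M ++ Q) ->
      [seq x <- s | x \in A0 :|: (A1 :|: A2)] = [seq x <- s | x \in A0].
    move=> s hs; apply: eq_in_filter => x /hs hx; rewrite !inE.
    have n1 : x \notin A1.
      by apply/negP => /(subsetP h1); rewrite inE => /(apP1 _ hx).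
    have n2 : x \notin A2.
      by apply/negP => /(subsetP h2); rewrite inE => /(apP2 _ hx).
    by rewrite (negPf n1) (negPf n2) !orbF.
  have nA0 : forall x, (x \in B1) || (x \in B2) -> x \notin A0.
    move=> x hx; apply/negP => /(subsetP h0); rewrite !inE hx.
    by [].
  have c1 : count (fun x => x \in A0 :|: (A1 :|: A2)) B1 = #|A1|.
    rewrite -(count_card u1 h1); apply: eq_in_count => x hx /=; rewrite !inE.
    rewrite (negPf (nA0 x _)) ?hx //=.
    case: (boolP (x \in A2)) => h; rewrite ?orbF ?orbT //.
    by move/subsetP: h2 => /(_ _ h); rewrite inE => /(ap12 _ hx).
  have c2 : count (fun x => x \in A0 :|: (A1 :|: A2)) B2 = #|A2|.
    rewrite -(count_card u2 h2); apply: eq_in_count => x hx /=; rewrite !inE.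
    rewrite (negPf (nA0 x _)) ?hx ?orbT //=.
    case: (boolP (x \in A1)) => h; rewrite ?orbF ?orbT //.
    by move/subsetP: h1 => /(_ _ h); rewrite inE => /ap12 /(_ hx).
  have cB' := cB (fun x => x \in A0 :|: (A1 :|: A2)).
  rewrite /tau !LAT_f !filter_cat !map_cat (map_f_block _ a1) (map_f_block _ a2) (map_f_block _ aB) cB' c1 c2.
  rewrite (fP P) ?(fP M) ?(fP Q) //; move=> x h; by rewrite !mem_cat h ?orbT.
rewrite (eq_bigr (fun A1 => \sum_(A2 : {set V} | A2 \subset S2) w p S1 A1 * w p S2 A2 *
   (#|S1|%:R * (La (#|A1| + #|A2|) - Lt #|A1| #|A2|) +
    #|S2|%:R * (Lb (#|A1| + #|A2|) - Lt #|A1| #|A2|)))); last first.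
  move=> A1 h1; apply: eq_bigr => A2 h2; by case: (key A1 A2 h1 h2) => -> -> ->.
case: (core r d_refl d_ge0 d_tri P' M' Q' x0) => [M0 | [Z [a [D [da [db [m [q [hD [hda [hdb H]]]]]]]]]]].
  have E : forall k1 k2, La (k1 + k2) = Lt k1 k2 /\ Lb (k1 + k2) = Lt k1 k2.
    by move=> k1 k2; rewrite /La /Lb /Lt M0 /= nseqD -!catA.
  rewrite big1 // => A1 _; rewrite big1 // => A2 _.
  by case: (E #|A1| #|A2|) => -> ->; rewrite !subrr !mulr0 addr0 mulr0.
exact: (block_formula p_ge0 p_le1 S1 S2 hD hda hdb H).
Qed.

End Main.

Unset Implicit Arguments.

Lemma minle {R : realFieldType} (a b e n1 n2 : R) : 0 < n1 -> 0 < n2 ->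
  n1 * (a - e) + n2 * (b - e) <= 0 -> Num.min a b <= e.
Proof.
move=> h1 h2 h; rewrite ge_min; case: (leP a e) => //= hae.
have t : 0 < n1 * (a - e) by rewrite mulr_gt0 // subr_gt0.
have : n2 * (b - e) < 0.
  move: t h; set u := n1 * (a - e); set v := n2 * (b - e); move=> t h; lra.
by rewrite pmulr_rlt0 // subr_lt0 => /ltW.
Qed.

Theorem lemma6 (R : realFieldType) (V X : finType) (d : V -> V -> R) (r : V)
    (grp : V -> X) (p : R)
    (d_refl : forall x, d x x = 0)
    (d_sym : forall x y, d x y = d y x)
    (d_ge0 : forall x y, 0 <= d x y)
    (d_tri : forall x y w, d x w <= d x y + d y w)
    (coloc : forall u w, u != r -> w != r -> grp u = grp w ->
        d u w = 0 /\ (forall y, d u y = d w y))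
    (p_ge0 : 0 <= p) (p_le1 : p <= 1)
    (tau : seq V) (Htau : master_tour r tau)
    (z : X) (Ci Cj : seq V)
    (HCi : maximal_run r grp z tau Ci) (HCj : maximal_run r grp z tau Cj)
    (Hij : Ci != Cj) :
  Num.min (ELAT d r p (move_after r tau Ci Cj))
          (ELAT d r p (move_before r tau Ci Cj))
    <= ELAT d r p tau.
Proof.
have [Utau Hr] := Htau.
have rt : r \notin tau by rewrite Hr eqxx.
have [P [M [Q HT]]] := runs_order HCi HCj Hij.
have [_ [_ [_ [nCi [aCi _]]]]] := HCi.
have [_ [_ [_ [nCj [aCj _]]]]] := HCj.
have [c0 hc0] : exists c0, c0 \in Ci by case: (Ci) nCi => [//|c C] _; exists c; rewrite mem_head.
have hx0 : inS r grp z c0 by move/allP: aCi => /(_ _ hc0).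
have aC0 := aCi.
have pos : forall C : seq V, C != [::] -> (0 : R) < #|[set x in C]|%:R.
  move=> C; case: C => [//|c C] _; rewrite ltr0n; apply/card_gt0P; exists c.
  by rewrite inE mem_head.
have aB : all (inS r grp z) (Ci ++ Cj) by rewrite all_cat aC0 aCj.
case: HT => HT; rewrite HT in Utau rt *.
- have [-> ->] := moves1 r Utau nCi nCj.
  have K := main_ineq d_refl d_sym d_ge0 d_tri coloc p_ge0 p_le1 hx0 Utau rt aC0 aCj aB.
  have K' := K (fun a => count_cat a Ci Cj).
  exact: minle (pos _ nCi) (pos _ nCj) K'.
- have [-> ->] := moves2 r Utau nCi nCj.
  have K := main_ineq d_refl d_sym d_ge0 d_tri coloc p_ge0 p_le1 hx0 Utau rt aCj aC0 aB.
  have K' := K (fun a => etrans (count_cat a Ci Cj) (addnC _ _)).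
  rewrite minC; exact: minle (pos _ nCj) (pos _ nCi) K'.
Qed.
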